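(* Let $n$ and $k$ be even integers with $1\le k<n/2$. Then $B(n,k)\neq C(n,k)$ if and only if $k^2\equiv\pm1\pmod{n/2}$. Moreover, if $k^2\equiv1\pmod{n/2}$ then $B(n,k)=\langle C(n,k),\lambda\rangle=\langle\rho,\delta,\beta,\lambda\rangle$, and if $k^2\equiv-1\pmod{n/2}$ then $B(n,k)=\langle C(n,k),\tau\rangle=\langle\rho,\delta,\beta,\tau\rangle$.
   Context: $\mathrm{DGP}(n,k)$ ($1\le k<n/2$) is the graph with vertex set $\{(u_i,j),(v_i,j): 0\le i\le n-1,\ j\in\{0,1\}\}$ and edges $\{(u_i,j),(u_{i+1},1-j)\}$ (outer edges, set $\mathcal{O}$), $\{(u_i,j),(v_i,1-j)\}$ (spokes, set $\mathcal{S}$), $\{(v_i,j),(v_{i+k},1-j)\}$ (inner edges, set $\mathcal{I}$), subscripts mod $n$ (the canonical double cover of $\mathrm{GP}(n,k)$). $A(n,k)$ is its automorphism group, $B(n,k)$ the setwise stabilizer of $\mathcal{S}$ in $A(n,k)$, and $C(n,k)$ the subgroup of $A(n,k)$ stabilizing each of $\mathcal{O},\mathcal{I},\mathcal{S}$ setwise. Permutations: $(u_i,j)^\rho=(u_{i+1},j)$, $(v_i,j)^\rho=(v_{i+1},j)$; $(u_i,j)^\delta=(u_{-i},j)$, $(v_i,j)^\delta=(v_{-i},j)$; $(u_i,j)^\beta=(u_i,1-j)$, $(v_i,j)^\beta=(v_i,1-j)$. $\lambda$: if $i+j$ odd, $(u_i,j)\mapsto(v_{1+(i-k)k},j)$,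 $(v_i,j)\mapsto(u_{ik},j)$; if $i+j$ even, $(u_i,j)\mapsto(v_{ik},j)$, $(v_i,j)\mapsto(u_{1+(i-k)k},j)$. $\tau$: if $i+j$ odd, $(u_i,j)\mapsto(v_{-1+(i-k)k},j)$, $(v_i,j)\mapsto(u_{ik},j)$; if $i+j$ even, $(u_i,j)\mapsto(v_{ik},j)$, $(v_i,j)\mapsto(u_{-1+(i-k)k},j)$. *)

(* Defs.v *)
From HB Require Import structures.
From mathcomp Require Import all_boot all_order all_fingroup all_algebra.
Set Implicit Arguments. Unset Strict Implicit. Unset Printing Implicit Defensive.
Import GRing.Theory.
Local Open Scope ring_scope.

(* Vertices of DGP(n,k): (s, i, j) with s = false for u_i, s = true for v_i,
   i in Z/nZ, j in {0,1} (j = false is 0, j = true is 1). *)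
Definition V (n : nat) := (bool * 'Z_n * bool)%type.

Definition uu n (i : 'Z_n) (j : bool) : V n := (false, i, j).
Definition vv n (i : 'Z_n) (j : bool) : V n := (true, i, j).

Definition Oedges n : {set {set V n}} :=
  [set [set uu i j; uu (i + 1) (~~ j)] | i : 'Z_n, j : bool].
Definition Sedges n : {set {set V n}} :=
  [set [set uu i j; vv i (~~ j)] | i : 'Z_n, j : bool].
Definition Iedges n (k : nat) : {set {set V n}} :=
  [set [set vv i j; vv (i + k%:R) (~~ j)] | i : 'Z_n, j : bool].
Definition Edges n k : {set {set V n}} := Oedges n :|: Sedges n :|: Iedges n k.

Definition stab_edges n (s : {perm V n}) (E : {set {set V n}}) : bool :=
  [set (s @: e : {set V n}) | e : {set V n} in E] == E.

Definition Aut n k : {set {perm V n}} := [set s | stab_edges s (Edges n k)].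
Definition Bgrp n k : {set {perm V n}} := [set s in Aut n k | stab_edges s (Sedges n)].
Definition Cgrp n k : {set {perm V n}} :=
  [set s in Aut n k | [&& stab_edges s (Oedges n), stab_edges s (Iedges n k)
                        & stab_edges s (Sedges n)]].

Definition rhof n (x : V n) : V n := let: (s, i, j) := x in (s, i + 1, j).
Definition rhoinv n (x : V n) : V n := let: (s, i, j) := x in (s, i - 1, j).
Lemma rhof_inj n : injective (@rhof n).
Proof. apply: (can_inj (g := @rhoinv n)) => -[[s i] j] /=; by rewrite addrK. Qed.
Definition rho n : {perm V n} := perm (@rhof_inj n).

Definition deltaf n (x : V n) : V n := let: (s, i, j) := x in (s, - i, j).
Lemma deltaf_inj n : injective (@deltaf n).
Proof. apply: (can_inj (g := @deltaf n)) => -[[s i] j] /=; by rewrite opprK. Qed.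
Definition delta n : {perm V n} := perm (@deltaf_inj n).

Definition betaf n (x : V n) : V n := let: (s, i, j) := x in (s, i, ~~ j).
Lemma betaf_inj n : injective (@betaf n).
Proof. apply: (can_inj (g := @betaf n)) => -[[s i] j] /=; by rewrite negbK. Qed.
Definition beta n : {perm V n} := perm (@betaf_inj n).

(* the maps lambda and tau (parity of i + j computed on the representative
   0 <= i < n; well defined since n is even in the theorem) *)
Definition lamf n (k : nat) (x : V n) : V n :=
  let: (s, i, j) := x in
  let K : 'Z_n := k%:R in
  if odd (val i + j) then
    (if s then uu (i * K) j else vv (1 + (i - K) * K) j)
  else
    (if s then uu (1 + (i - K) * K) j else vv (i * K) j).

Definition tauf n (k : nat) (x : V n) : V n :=
  let: (s, i, j) := x in
  let K : 'Z_n := k%:R in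
  if odd (val i + j) then
    (if s then uu (i * K) j else vv (-1 + (i - K) * K) j)
  else
    (if s then uu (-1 + (i - K) * K) j else vv (i * K) j).

(* Main.v *)
Require Import Defs.
From mathcomp Require Import all_boot all_order all_fingroup all_algebra.
From mathcomp Require Import ring.
Set Implicit Arguments. Unset Strict Implicit. Unset Printing Implicit Defensive.
Import GRing.Theory.
Local Open Scope ring_scope.

Lemma set2_eq (T : finType) (a b c d : T) :
  [set a; b] = [set c; d] -> a != b ->
  (a = c /\ b = d) \/ (a = d /\ b = c).
Proof.
move=> E nab.
have : a \in [set c; d] by rewrite -E !inE eqxx.
have : b \in [set c; d] by rewrite -E !inE eqxx orbT.
have : c \in [set a; b] by rewrite E !inE eqxx.
rewrite !inE => /orP[] /eqP Hc /orP[] /eqP Hb /orP[] /eqP Ha; subst;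
  rewrite ?eqxx in nab; auto; by [].
Qed.

Lemma imset2E (T : finType) (f : T -> T) a b : f @: [set a; b] = [set f a; f b].
Proof. by rewrite imsetU1 imset_set1. Qed.

Lemma stab_edgesP n (g : {perm V n}) (E : {set {set V n}}) :
  (forall e, e \in E -> (g @: e : {set V n}) \in E) -> stab_edges g E.
Proof.
move=> H; rewrite /stab_edges eqEcard; apply/andP; split.
  by apply/subsetP => x /imsetP[e eE ->]; apply: H.
rewrite card_imset //; apply: imset_inj; exact: perm_inj.
Qed.

Lemma stab_edges_in n (g : {perm V n}) (E : {set {set V n}}) (e : {set V n}) :
  stab_edges g E -> e \in E -> (g @: e : {set V n}) \in E.
Proof. rewrite /stab_edges => /eqP HE eE; rewrite -HE; exact: imset_f. Qed.

Section Main.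
Variables m k : nat.
Local Notation n := m.+2.
Hypothesis Hm : ~~ odd m.
Hypothesis Hk : ~~ odd k.
Hypothesis Hk1 : (1 <= k)%N.
Hypothesis Hkn : (k.*2 < n)%N.

Local Notation K := (k%:R : 'Z_n).

Lemma valD (a b : 'Z_n) : nat_of_ord (a + b) = ((val a + val b) %% n)%N.
Proof. by []. Qed.
Lemma valM (a b : 'Z_n) : nat_of_ord (a * b) = ((val a * val b) %% n)%N.
Proof. by []. Qed.
Lemma valN (a : 'Z_n) : nat_of_ord (- a) = ((n - val a) %% n)%N.
Proof. by []. Qed.
Lemma valn t : nat_of_ord (t%:R : 'Z_n) = (t %% n)%N.
Proof. by rewrite Zp_nat. Qed.

Lemma oddn_ : odd n = false. Proof. by rewrite /= negbK; apply/negbTE. Qed.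

Lemma zoddD (a b : 'Z_n) : odd (a + b)%R = odd a (+) odd b.
Proof. by rewrite valD odd_mod ?oddn_ // oddD. Qed.
Lemma zoddM (a b : 'Z_n) : odd (a * b)%R = odd a && odd b.
Proof. by rewrite valM odd_mod ?oddn_ // oddM. Qed.
Lemma zoddN (a : 'Z_n) : odd (- a)%R = odd a.
Proof.
rewrite valN odd_mod ?oddn_ //. rewrite oddB ?oddn_ //. exact: ltnW (ltn_ord a).
Qed.
Lemma zoddB (a b : 'Z_n) : odd (a - b)%R = odd a (+) odd b.
Proof. by rewrite zoddD zoddN. Qed.
Lemma zoddn t : odd (t%:R : 'Z_n) = odd t.
Proof. by rewrite valn odd_mod ?oddn_. Qed.
Lemma zodd1 : odd (1%R : 'Z_n) = true.
Proof. by rewrite -(zoddn 1). Qed.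
Lemma zoddK : odd K = false.
Proof. by rewrite zoddn; apply/negbTE. Qed.


Definition sp (x : V n) : V n := let: (s, i, j) := x in (~~ s, i, ~~ j).
Definition fw (x : V n) : V n :=
  let: (s, i, j) := x in (s, if s then i + K else i + 1, ~~ j).
Definition bw (x : V n) : V n :=
  let: (s, i, j) := x in (s, if s then i - K else i - 1, ~~ j).

Lemma spK : involutive sp.
Proof. by case=> [[s i] j] /=; rewrite !negbK. Qed.
Lemma fwK : cancel fw bw.
Proof. by case=> [[[] i] j] /=; rewrite negbK addrK. Qed.
Lemma bwK : cancel bw fw.
Proof. by case=> [[[] i] j] /=; rewrite negbK subrK. Qed.
Lemma sp_s x : (sp x).1.1 = ~~ x.1.1. Proof. by case: x => [[]]. Qed.
Lemma fw_s x : (fw x).1.1 = x.1.1. Proof. by case: x => [[]]. Qed.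
Lemma bw_s x : (bw x).1.1 = x.1.1. Proof. by case: x => [[]]. Qed.
Lemma sp_neq x : x != sp x.
Proof. case: x => [[s i] j]; apply/eqP => -[]; by case: s. Qed.
Lemma fw_neq x : x != fw x.
Proof. case: x => [[s i] j]; apply/eqP => -[]; by case: j. Qed.
Lemma fw_sp x : fw x != sp x.
Proof. case: x => [[s i] j]; apply/eqP => -[]; by case: s. Qed.

Lemma inS e : e \in Sedges n -> exists x, e = [set x; sp x].
Proof. by case/imset2P => i j _ _ ->; exists (uu i j). Qed.
Lemma S_in x : [set x; sp x] \in Sedges n.
Proof.
case: x => [[[] i] j]; apply/imset2P.
  by exists i (~~ j) => //=; rewrite negbK setUC.
by exists i j.
Qed.
Lemma inH e : e \in Oedges n :|: Iedges n k -> exists x, e = [set x; fw x].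
Proof.
by rewrite inE => /orP[] /imset2P[i j _ _ ->]; [exists (uu i j) | exists (vv i j)].
Qed.
Lemma O_in x : x.1.1 = false -> [set x; fw x] \in Oedges n.
Proof. by case: x => [[[] i] j] // _; apply/imset2P; exists i j. Qed.
Lemma I_in x : x.1.1 = true -> [set x; fw x] \in Iedges n k.
Proof. by case: x => [[[] i] j] // _; apply/imset2P; exists i j. Qed.
Lemma H_edges x : [set x; fw x] \in Edges n k.
Proof.
rewrite !inE; case: x => [[s i] j]; case: s.
  by rewrite (I_in (x := (true, i, j))) ?orbT.
by rewrite (O_in (x := (false, i, j))).
Qed.
Lemma S_edges x : [set x; sp x] \in Edges n k.
Proof. by rewrite !inE S_in ?orbT. Qed.
Lemma Edges_inv e : e \in Edges n k -> e \in Sedges n \/ e \in Oedges n :|: Iedges n k.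
Proof. rewrite !inE => /orP[/orP[]|] ->; rewrite ?orbT; auto. Qed.

Definition good (g : {perm V n}) :=
  (forall x, g (sp x) = sp (g x)) /\
  (forall x, g (fw x) = fw (g x) \/ g (fw x) = bw (g x)).

Lemma B_good g : g \in Bgrp n k -> good g.
Proof.
rewrite !inE => /andP[gA gS].
have Hsp : forall x, g (sp x) = sp (g x).
  move=> x; have := stab_edges_in gS (S_in x); rewrite imset2E => /inS [z Hz].
  have [[-> ->]|[-> ->]] := set2_eq Hz ltac:(by rewrite (inj_eq perm_inj) sp_neq).
    by [].
  by rewrite spK.
split=> // x.
have := stab_edges_in gA (H_edges x); rewrite imset2E => /Edges_inv [].
  move=> /inS [z Hz].
  have [[E1 E2]|[E1 E2]] := set2_eq Hz ltac:(by rewrite (inj_eq perm_inj) fw_neq).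
  + have : g (fw x) = g (sp x) by rewrite Hsp E1 E2.
    by move/perm_inj/eqP; rewrite (negbTE (fw_sp x)).
  + have : g (fw x) = g (sp x) by rewrite Hsp E1 E2 spK.
    by move/perm_inj/eqP; rewrite (negbTE (fw_sp x)).
move=> /inH [z Hz].
have [[-> ->]|[-> ->]] := set2_eq Hz ltac:(by rewrite (inj_eq perm_inj) fw_neq).
  by left.
by right; rewrite fwK.
Qed.

Lemma inO e : e \in Oedges n -> exists x, x.1.1 = false /\ e = [set x; fw x].
Proof. by case/imset2P => i j _ _ ->; exists (uu i j). Qed.
Lemma inI e : e \in Iedges n k -> exists x, x.1.1 = true /\ e = [set x; fw x].
Proof. by case/imset2P => i j _ _ ->; exists (vv i j). Qed.

Lemma good_set g x : good g ->
  exists z, g @: [set x; fw x] = [set z; fw z] /\ z.1.1 = (g x).1.1.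
Proof.
case=> _ /(_ x) [] E; rewrite imset2E E.
  by exists (g x).
by exists (bw (g x)); rewrite bwK setUC bw_s.
Qed.

Lemma good_B g : good g -> g \in Bgrp n k.
Proof.
move=> gg; have [Hsp _] := gg.
rewrite !inE; apply/andP; split; apply: stab_edgesP => e.
  move/Edges_inv => [/inS [x ->] | /inH [x ->]].
    by rewrite imset2E Hsp S_edges.
  by have [z [-> _]] := good_set x gg; apply: H_edges.
by move=> /inS [x ->]; rewrite imset2E Hsp S_in.
Qed.

Lemma good_C g : good g -> (forall x, x.1.1 = false -> (g x).1.1 = false) ->
  g \in Cgrp n k.
Proof.
move=> gg HU; have [Hsp _] := gg.
have HW : forall x, x.1.1 = true -> (g x).1.1 = true.
  move=> x Hx; rewrite -(spK x) Hsp sp_s HU //.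
  by rewrite sp_s Hx.
have := good_B gg; rewrite !inE => /andP[-> ->]; rewrite andbT /=.
apply/andP; split; apply: stab_edgesP => e.
  move=> /inO [x [Hx ->]]; have [z [-> Hz]] := good_set x gg.
  by apply: O_in; rewrite Hz HU.
move=> /inI [x [Hx ->]]; have [z [-> Hz]] := good_set x gg.
by apply: I_in; rewrite Hz HW.
Qed.

Lemma good_bw g x : good g -> g (bw x) = fw (g x) \/ g (bw x) = bw (g x).
Proof.
case=> _ /(_ (bw x)); rewrite bwK => -[] ->.
  by right; rewrite fwK.
by left; rewrite bwK.
Qed.

Lemma good1 : good 1.
Proof. by split=> x; rewrite !perm1 //; left. Qed.

Lemma good_mul g h : good g -> good h -> good (g * h).
Proof.
move=> gg gh; have [gs gf] := gg; have [hs hf] := gh.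
split=> x; rewrite !permM.
  by rewrite gs hs.
case: (gf x) => ->; [exact: (hf (g x)) | ].
by case: (good_bw (g x) gh) => ->; auto.
Qed.

Lemma B_group : group_set (Bgrp n k).
Proof.
apply/group_setP; split; first exact: good_B good1.
move=> x y /B_good gx /B_good gy; exact: good_B (good_mul gx gy).
Qed.

Lemma good_rho : good (rho n).
Proof.
split=> -[[s i] j]; rewrite !permE //=.
by left; case: s => //=; rewrite addrAC.
Qed.
Lemma good_delta : good (delta n).
Proof.
split=> -[[s i] j]; rewrite !permE //=.
by right; case: s => //=; rewrite opprD.
Qed.
Lemma good_beta : good (beta n).
Proof. by split=> -[[s i] j]; rewrite !permE //=; left. Qed.

Lemma natr_eq0 t : (t%:R : 'Z_n) = 0 -> (t %% n = 0)%N.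
Proof. by move/(congr1 val); rewrite /= valn. Qed.

Lemma n_gt2 : (2 < n)%N.
Proof. by apply: leq_ltn_trans Hkn; rewrite -addnn; exact: (leq_add Hk1 Hk1). Qed.

Lemma two_neq0 : (1 + 1 : 'Z_n) != 0.
Proof.
apply/eqP; rewrite -(natrD _ 1 1) => /natr_eq0.
by rewrite modn_small // n_gt2.
Qed.

Lemma KK_neq0 : K + K != 0.
Proof.
apply/eqP; rewrite -natrD addnn => /natr_eq0.
rewrite modn_small //; case: k Hk1 => //.
Qed.

Lemma fw2_neq z : fw (fw z) != z.
Proof.
case: z => [[s i] j]; apply/eqP; case: s => -[].
  by move/eqP; rewrite -addrA -subr_eq0 addrAC subrr add0r (negbTE KK_neq0).
by move/eqP; rewrite -addrA -subr_eq0 addrAC subrr add0r (negbTE two_neq0).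
Qed.

Lemma iter_fw_u t i j :
  iter t fw (false, i, j) = (false, i + t%:R, odd t (+) j).
Proof.
elim: t => [|t IH]; first by rewrite addr0.
rewrite iterS IH /= mulrSr addrA; congr (_, _, _).
by rewrite /= ; case: (odd t); case: (j).
Qed.

Lemma iter_fw_v t i j :
  iter t fw (true, i, j) = (true, i + t%:R * K, odd t (+) j).
Proof.
elim: t => [|t IH]; first by rewrite mul0r addr0.
rewrite iterS IH /= mulrSr mulrDl mul1r addrA; congr (_, _, _).
by rewrite /= ; case: (odd t); case: (j).
Qed.
Lemma iter_bw_u t i j :
  iter t bw (false, i, j) = (false, i - t%:R, odd t (+) j).
Proof.
elim: t => [|t IH]; first by rewrite subr0.
rewrite iterS IH /= mulrSr opprD addrA; congr (_, _, _).
by rewrite /= ; case: (odd t); case: (j).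
Qed.
Lemma iter_bw_v t i j :
  iter t bw (true, i, j) = (true, i - t%:R * K, odd t (+) j).
Proof.
elim: t => [|t IH]; first by rewrite mul0r subr0.
rewrite iterS IH /= mulrSr mulrDl mul1r opprD addrA; congr (_, _, _).
by rewrite /= ; case: (odd t); case: (j).
Qed.

Lemma propag g x (F : V n -> V n) : good g -> (F = fw \/ F = bw) ->
  g (fw x) = F (g x) -> forall t, g (iter t fw x) = iter t F (g x).
Proof.
move=> gg HF H1.
suff: forall t, g (iter t fw x) = iter t F (g x) /\
                g (iter t.+1 fw x) = iter t.+1 F (g x) by move=> H t; case: (H t).
elim=> [|t [IH1 IH2]]; first by split.
split=> //.
rewrite [iter t.+2 _ _]iterS [iter t.+2 _ _]iterS.
have [] := (gg.2 (iter t.+1 fw x)); rewrite IH2 => E.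
  case: HF => HF; first by rewrite E HF.
  have E' : g (fw (fw (iter t fw x))) = g (iter t fw x).
    by rewrite -iterS E IH1 HF iterS bwK.
  by move/perm_inj/eqP: E'; rewrite (negbTE (fw2_neq _)).
case: HF => HF; last by rewrite E HF.
have E' : g (fw (fw (iter t fw x))) = g (iter t fw x).
  by rewrite -iterS E IH1 HF iterS fwK.
by move/perm_inj/eqP: E'; rewrite (negbTE (fw2_neq _)).
Qed.

Lemma K2E : (k.*2)%:R * K = K * K * (1 + 1).
Proof. by rewrite -addnn natrD; ring. Qed.

Lemma dir1 g x : good g -> x.1.1 = false -> (g x).1.1 = true ->
  K * K * (1 + 1) = 1 + 1 \/ K * K * (1 + 1) = - (1 + 1).
Proof.
move=> gg; have [Hsp Hfw] := gg.
case: x => [[s i] j] /= -> {s}.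
case Ey : (g (false, i, j)) => [[s' i'] j'] /= Hs'; subst s'.
set x := (false, i, j).
have Hb : sp (iter k.*2 fw x) = fw (fw (sp x)).
  rewrite iter_fw_u /= odd_double /= !negbK; congr (_, _, _).
  by rewrite -addnn natrD addrA.
have Hab : g (fw (fw (sp x))) != g (sp x) by rewrite (inj_eq perm_inj) fw2_neq.
have [F [HF HF1]] : exists F, (F = fw \/ F = bw) /\ g (fw x) = F (g x).
  by case: (Hfw x) => E; [exists fw | exists bw]; auto.
have HP := propag gg HF HF1 (k.*2).
rewrite Hsp Ey in Hab.
case: (Hfw (fw (sp x))) => E2; case: (Hfw (sp x)) => E1; rewrite E1 Hsp Ey in E2;
  rewrite E2 ?fwK ?bwK ?eqxx // in Hab;
  rewrite -Hb Hsp HP Ey in E2;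
  case: HF => HF; rewrite HF ?iter_fw_v ?iter_bw_v in E2;
    move/(congr1 (fun v => v.1.2)): E2 => /= E2;
  rewrite -K2E; move: E2; rewrite -!addrA => /addrI E2;
  first [ by left; rewrite E2 | by right; rewrite E2 opprD
        | by right; rewrite -E2 opprK
        | by left; rewrite -[LHS]opprK E2 !opprD !opprK ].
Qed.


Lemma natr_eqmod a b : ((a%:R : 'Z_n) = b%:R) <-> (a = b %[mod n])%N.
Proof.
split; first by move/(congr1 (@nat_of_ord _)); rewrite !valn.
by move=> E; apply: ord_inj; rewrite !valn E.
Qed.

Lemma mod2 a b h : ((a * 2) %% (h * 2) = (b * 2) %% (h * 2))%N <-> (a %% h = b %% h)%N.
Proof.
rewrite -!muln_modl; split; last by move=> ->.
by move/eqP; rewrite eqn_mul2r /= => /eqP.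
Qed.

Lemma KKE : K * K * (1 + 1) = (k * k * 2)%:R.
Proof. by rewrite !natrM -(natrD _ 1 1). Qed.

Lemma cond_p : K * K * (1 + 1) = 1 * (1 + 1) <-> (k ^ 2 = 1 %[mod n./2])%N.
Proof.
rewrite mul1r KKE -(natrD _ 1 1) natr_eqmod.
have Hn : n = (n./2 * 2)%N by rewrite muln2 -{1}(odd_double_half n) oddn_.
set h := n./2; rewrite Hn -(mod2 (k ^ 2) 1 h); done.
Qed.

Lemma cond_m : K * K * (1 + 1) = -1 * (1 + 1) <-> (k ^ 2 + 1 = 0 %[mod n./2])%N.
Proof.
rewrite mulN1r KKE; split.
  move/(congr1 (fun z => z + (1 + 1))); rewrite addNr -(natrD _ 1 1) -natrD.
  rewrite -(mulnDl _ 1 2) -[0]/(0%:R) natr_eqmod.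
  have Hn : n = (n./2 * 2)%N by rewrite muln2 -{1}(odd_double_half n) oddn_.
  set h := n./2; rewrite Hn -[(0 %% (h * 2))%N]/((0 * 2) %% (h * 2))%N mod2; done.
move=> H.
have : ((k * k + 1) * 2)%:R = (0 * 2)%:R :> 'Z_n.
  apply/natr_eqmod.
  have Hn : n = (n./2 * 2)%N by rewrite muln2 -{1}(odd_double_half n) oddn_.
  set h := n./2 in H *; rewrite Hn mod2; done.
rewrite mulnDl natrD mul0n => /eqP; rewrite addr_eq0 => /eqP ->.
by rewrite -(natrD _ 1 1).
Qed.

Section Cond.
Variable e : 'Z_n.
Hypothesis He : e = 1 \/ e = -1.
Hypothesis HK : K * K * (1 + 1) = e * (1 + 1).

Lemma ee : e * e = 1.
Proof. by case: He => ->; rewrite ?mulrNN mulr1. Qed.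
Lemma odde : odd e = true.
Proof. by case: He => ->; rewrite ?zoddN zodd1. Qed.

Lemma half_zero (d : 'Z_n) : d + d = 0 -> odd d = false -> d = 0.
Proof.
move=> Hdd Hd.
pose c : 'Z_n := ((d : nat)./2)%:R.
pose k2 : 'Z_n := (k./2)%:R.
have Ed : d = c + c.
  rewrite -natrD addnn -{1}(natr_Zp d); congr (_%:R).
  by rewrite -{1}(odd_double_half d) Hd.
have EK : K = k2 + k2.
  rewrite -natrD addnn; congr (_%:R).
  by rewrite -{1}(odd_double_half k) (negbTE Hk).
have H0 : c * (e * (1 + 1)) = (d + d) * (k2 * k2 * (1 + 1)).
  by rewrite -HK EK Ed; ring.
rewrite Hdd mul0r in H0.
have : c * (1 + 1) = 0.
  have -> : c * (1 + 1) = (e * e) * c * (1 + 1) by rewrite ee mul1r.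
  have -> : e * e * c * (1 + 1) = e * (c * (e * (1 + 1))) by ring.
  by rewrite H0 mulr0.
by rewrite Ed mulrDr mulr1.
Qed.

Lemma mulK_inj (i i' : 'Z_n) : i * K = i' * K -> odd i = odd i' -> i = i'.
Proof.
move=> E Ho; apply/eqP; rewrite -subr_eq0; apply/eqP.
apply: half_zero; last by rewrite zoddB Ho addbb.
have H1 : (i - i') * (K * K * (1 + 1)) = 0.
  by rewrite !mulrA mulrBl E subrr !mul0r.
rewrite HK in H1.
have : (i - i') * (1 + 1) = 0.
  have -> : (i - i') * (1 + 1) = (e * e) * (i - i') * (1 + 1) by rewrite ee mul1r.
  have -> : e * e * (i - i') * (1 + 1) = e * ((i - i') * (e * (1 + 1))) by ring.
  by rewrite H1 mulr0.
by rewrite mulrDr mulr1.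
Qed.

Definition muf (x : V n) : V n :=
  let: (s, i, j) := x in
  if odd (val i + j) then
    (if s then uu (i * K) j else vv (e + (i - K) * K) j)
  else
    (if s then uu (e + (i - K) * K) j else vv (i * K) j).


Lemma par_e (i : 'Z_n) : odd (e + (i - K) * K)%R = true.
Proof. by rewrite zoddD zoddM zoddK andbF addbF odde. Qed.
Lemma par_iK (i : 'Z_n) : odd (i * K)%R = false.
Proof. by rewrite zoddM zoddK andbF. Qed.

Lemma muf_inj : injective muf.
Proof.
move=> [[s i] j] [[s' i'] j'] /=.
have Hpar : forall (a b : 'Z_n), a * K = b * K -> odd (a + j)%N = odd (b + j')%N ->
    j = j' -> (a, j) = (b, j').
  move=> a b E P Ej; subst j'; rewrite (mulK_inj E) //.
  by move: P; rewrite !oddD; case: (odd a); case: (odd b); case: (j).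
case: s; case: s'; case: ifP => P1; case: ifP => P2 // => Heq;
  move: (congr1 (fun v : V n => v.1.2) Heq) (congr1 (fun v : V n => v.2) Heq) => /= E Ej;
  try (by move: (congr1 (fun z : 'Z_n => odd z) E) => /=; rewrite ?par_e ?par_iK);
  first [ by have [-> ->] := Hpar i i' E (etrans P1 (esym P2)) Ej
        | have E' : i * K = i' * K by move: E; rewrite !mulrBl => /addrI /addIr ];
  by have [-> ->] := Hpar i i' E' (etrans P1 (esym P2)) Ej.
Qed.

Lemma par_neg (i : 'Z_n) (j : bool) : odd (i + ~~ j)%N = ~~ odd (i + j)%N.
Proof. by rewrite !oddD !oddb addbN. Qed.

Lemma muE s i j : muf (s, i, j) =
  if odd (i + j)%N then (if s then uu (i * K) j else vv (e + (i - K) * K) j)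
  else (if s then uu (e + (i - K) * K) j else vv (i * K) j).
Proof. by []. Qed.
Lemma fwE s i j : fw (s, i, j) = (s, if s then i + K else i + 1, ~~ j).
Proof. by []. Qed.
Lemma bwE s i j : bw (s, i, j) = (s, if s then i - K else i - 1, ~~ j).
Proof. by []. Qed.
Lemma spE s i j : sp (s, i, j) = (~~ s, i, ~~ j).
Proof. by []. Qed.

Lemma mu_sp x : muf (sp x) = sp (muf x).
Proof.
case: x => [[s i] j]; rewrite spE !muE par_neg.
by case: s; case: (odd (i + j)%N).
Qed.

Lemma mu_fw x : muf (fw x) = fw (muf x) \/ muf (fw x) = bw (muf x).
Proof.
case: x => [[s i] j]; case: s; rewrite fwE !muE !oddD !oddb.
  rewrite zoddD zoddK addbF addbN.
  case: (odd i (+) j) => /=; rewrite /uu.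
    by case: He => ->; [left | right]; congr (_, _, _); ring.
  have -> : (i + K) * K = e + (i - K) * K + (K * K * (1 + 1) - e) by ring.
  rewrite HK; case: He => ->; [left | right]; congr (_, _, _); ring.
rewrite zoddD zodd1 addbT addNb addbN negbK.
case: (odd i (+) j) => /=; rewrite /vv; left; congr (_, _, _); ring.
Qed.

Definition mu := perm muf_inj.

Lemma good_mu : good mu.
Proof. by split=> x; rewrite !permE; [exact: mu_sp | exact: mu_fw]. Qed.


Lemma mu_s x : (mu x).1.1 = ~~ x.1.1.
Proof. by rewrite permE; case: x => [[[] i] j]; rewrite muE; case: ifP. Qed.

Lemma n_gt4 : (4 < n)%N.
Proof.
have k2 : (2 <= k)%N.
  by case: k Hk Hk1 => [|[|k']] //.
by apply: leq_ltn_trans Hkn; rewrite -addnn; exact: (leq_add k2 k2).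
Qed.

Lemma K4_neq0 : K + K + K + K != 0.
Proof.
apply/eqP => H.
have H1 : e * ((1 + 1) * (1 + 1)) = 0.
  have -> : e * ((1 + 1) * (1 + 1)) = (1 + 1) * (e * (1 + 1)) by ring.
  rewrite -HK.
  have -> : (1 + 1) * (K * K * (1 + 1)) = K * (K + K + K + K) by ring.
  by rewrite H mulr0.
have H2 : ((1 + 1) * (1 + 1) : 'Z_n) = 0.
  have -> : ((1 + 1) * (1 + 1) : 'Z_n) = e * (e * ((1 + 1) * (1 + 1))).
    by rewrite mulrA ee mul1r.
  by rewrite H1 mulr0.
move: H2; rewrite -(natrD _ 1 1) -natrM => /natr_eq0.
by rewrite modn_small // n_gt4.
Qed.

Lemma fw4_neq z : z.1.1 = true -> fw (fw z) != bw (bw z).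
Proof.
case: z => [[[] i] j] // _; rewrite !fwE !bwE /=.
apply/eqP => /(congr1 (fun v : V n => v.1.2)) /= /eqP; rewrite -subr_eq0.
have -> : i + K + K - (i - K - K) = K + K + K + K by ring.
by rewrite (negbTE K4_neq0).
Qed.

Definition x0 : V n := (false, 0, false).

Lemma natrn : (n%:R : 'Z_n) = 0.
Proof. by apply: ord_inj; rewrite valn modnn. Qed.

Lemma fix_id g : good g -> g x0 = x0 -> g (fw x0) = fw x0 -> g = 1%g.
Proof.
move=> gg H0 H1; have [Hsp Hfw] := gg.
have HP := propag gg (or_introl erefl) (etrans H1 (congr1 fw (esym H0))).
rewrite H0 in HP.
have Hu : forall i : 'Z_n, g (false, i, odd i) = (false, i, odd i).
  move=> i; have := HP (val i); rewrite iter_fw_u add0r natr_Zp addbF; exact.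
have Ha : forall i : 'Z_n, g (true, i, ~~ odd i) = (true, i, ~~ odd i).
  by move=> i; rewrite -[(true, i, _)]/(sp (false, i, odd i)) Hsp Hu.
have Hmm : forall i : 'Z_n, g (true, i + K, odd i) = (true, i + K, odd i).
  move=> i; have := Hfw (true, i, ~~ odd i); rewrite Ha fwE negbK /=.
  case=> // E; exfalso.
  have := Hfw (true, i + K, odd i); rewrite E fwE /=.
  have -> : (true, i + K + K, ~~ odd i) = (true, (i + K + K), ~~ odd (i + K + K)%R).
    by rewrite !zoddD zoddK !addbF.
  rewrite Ha.
  case=> /(congr1 (fun v : V n => v.1.2)) /= /eqP; rewrite -subr_eq0.
    have -> : i + K + K - (i - K + K) = K + K by ring.
    by rewrite (negbTE KK_neq0).
  have -> : i + K + K - (i - K - K) = K + K + K + K by ring.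
  by rewrite (negbTE K4_neq0).
have Hv : forall i : 'Z_n, g (true, i, odd i) = (true, i, odd i).
  by move=> i; have := Hmm (i - K); rewrite subrK zoddB zoddK addbF.
apply/permP => -[[s i] j]; rewrite perm1.
have [->|->] : j = odd i \/ j = ~~ odd i by case: (j); case: (odd i); auto.
  by case: s; [apply: Hv | apply: Hu].
case: s; first by apply: Ha.
by rewrite -[(false, i, _)]/(sp (true, i, odd i)) Hsp Hv.
Qed.


Local Notation G := (<< [set rho n; delta n; beta n; mu] >>)%g.

Lemma rho_in : rho n \in G. Proof. by apply: mem_gen; rewrite !inE eqxx. Qed.
Lemma delta_in : delta n \in G. Proof. by apply: mem_gen; rewrite !inE eqxx ?orbT. Qed.
Lemma beta_in : beta n \in G. Proof. by apply: mem_gen; rewrite !inE eqxx ?orbT. Qed.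
Lemma mu_in : mu \in G. Proof. by apply: mem_gen; rewrite !inE eqxx ?orbT. Qed.

Lemma rho_pow t s i j : (rho n ^+ t)%g (s, i, j) = (s, i + t%:R, j).
Proof.
elim: t => [|t IH]; first by rewrite expg0 perm1 addr0.
by rewrite expgSr permM IH permE /= mulrSr addrA.
Qed.

Lemma good_rho_pow t : good (rho n ^+ t)%g.
Proof. elim: t => [|t IH]; [exact: good1 | rewrite expgSr; exact: good_mul IH good_rho]. Qed.

Lemma rho_pow_in t : (rho n ^+ t)%g \in G.
Proof. by apply: groupX; apply: rho_in. Qed.

Lemma step3 g : good g -> g x0 = x0 -> g \in G.
Proof.
move=> gg H0.
case: (gg.2 x0) => E; rewrite H0 in E.
  by rewrite (fix_id gg H0 E) group1.
have gd := good_mul gg good_delta.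
have H0' : (g * delta n)%g x0 = x0 by rewrite permM H0 permE /= oppr0.
have H1' : (g * delta n)%g (fw x0) = fw x0.
  by rewrite permM E permE /=; congr (_, _, _); ring.
have := fix_id gd H0' H1' => Hid.
have : (g * delta n)%g \in G by rewrite Hid group1.
by rewrite groupMr // delta_in.
Qed.

Lemma step2 g : good g -> (g x0).1.1 = false -> g \in G.
Proof.
move=> gg; case Eg : (g x0) => [[s i'] j'] /= Hs; subst s.
pose g1 := (g * (rho n ^+ (n - i')))%g.
have gg1 : good g1 by apply: good_mul gg (good_rho_pow _).
have E1 : g1 x0 = (false, 0, j').
  rewrite permM Eg rho_pow natrB; last by apply: ltnW.
  by rewrite natrn natr_Zp; congr (_, _, _); ring.
suff : g1 \in G by rewrite groupMr // rho_pow_in.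
move: E1; case: (j') => E1.
  have gg2 := good_mul gg1 good_beta.
  have : (g1 * beta n)%g \in G.
    by apply: step3 gg2 _; rewrite permM E1 permE.
  by rewrite groupMr // beta_in.
exact: step3 gg1 E1.
Qed.

Lemma reduce g : good g -> g \in G.
Proof.
move=> gg; case Es : (g x0).1.1; last exact: step2.
have gm := good_mul gg good_mu.
have : (g * mu)%g \in G by apply: step2 gm _; rewrite permM mu_s Es.
by rewrite groupMr // mu_in.
Qed.
End Cond.

Lemma CsubB : Cgrp n k \subset Bgrp n k.
Proof. by apply/subsetP => g; rewrite !inE => /andP[-> /and3P[_ _ ->]]. Qed.

Lemma C_U g x : g \in Cgrp n k -> x.1.1 = false -> (g x).1.1 = false.
Proof.
rewrite !inE => /andP[_ /and3P[gO _ _]] Hx.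
have := stab_edges_in gO (O_in Hx); rewrite imset2E => /inO [z [Hz E]].
have : g x \in [set z; fw z] by rewrite -E !inE eqxx.
by rewrite !inE => /orP[] /eqP ->; rewrite ?fw_s.
Qed.

Lemma rho_C : rho n \in Cgrp n k.
Proof. by apply: good_C good_rho _ => -[[s i] j]; rewrite permE. Qed.
Lemma delta_C : delta n \in Cgrp n k.
Proof. by apply: good_C good_delta _ => -[[s i] j]; rewrite permE. Qed.
Lemma beta_C : beta n \in Cgrp n k.
Proof. by apply: good_C good_beta _ => -[[s i] j]; rewrite permE. Qed.

Lemma gen_part e (He : e = 1 \/ e = -1) (HK : K * K * (1 + 1) = e * (1 + 1)) :
  Bgrp n k = (<< Cgrp n k :|: [set mu He HK] >>)%g /\
  Bgrp n k = (<< [set rho n; delta n; beta n; mu He HK] >>)%g.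
Proof.
have S1 : Bgrp n k \subset << [set rho n; delta n; beta n; mu He HK] >>%g.
  by apply/subsetP => h /B_good /(reduce He HK).
have S2 : << [set rho n; delta n; beta n; mu He HK] >>%g \subset
          << Cgrp n k :|: [set mu He HK] >>%g.
  rewrite gen_subG; apply/subsetP => h; rewrite !inE => /orP[/orP[/orP[]|]|] /eqP ->;
    by apply: mem_gen; rewrite in_setU ?rho_C ?delta_C ?beta_C ?in_set1 ?eqxx ?orbT.
have S3 : << Cgrp n k :|: [set mu He HK] >>%g \subset Bgrp n k.
  rewrite -(gen_set_id B_group); apply: genS; apply/subsetP => h.
  rewrite in_setU in_set1 => /orP[|/eqP ->]; last by apply: good_B; apply: good_mu.
  by move=> gC; apply: (subsetP CsubB).
split; apply/eqP; rewrite eqEsubset.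
  by rewrite S3 (subset_trans S1 S2).
by rewrite S1 (subset_trans S2 S3).
Qed.

Lemma main_m :
  (Bgrp n k != Cgrp n k <->
     (k ^ 2 = 1 %[mod n./2] \/ k ^ 2 + 1 = 0 %[mod n./2]))%N
  /\ ((k ^ 2 = 1 %[mod n./2])%N ->
      exists lam : {perm V n}, (forall x, lam x = lamf k x) /\
        Bgrp n k = (<< Cgrp n k :|: [set lam] >>)%g /\
        Bgrp n k = (<< [set rho n; delta n; beta n; lam] >>)%g)
  /\ ((k ^ 2 + 1 = 0 %[mod n./2])%N ->
      exists tau : {perm V n}, (forall x, tau x = tauf k x) /\
        Bgrp n k = (<< Cgrp n k :|: [set tau] >>)%g /\
        Bgrp n k = (<< [set rho n; delta n; beta n; tau] >>)%g).
Proof.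
split; [split | split].
- move=> BC.
  have : ~~ (Bgrp n k \subset Cgrp n k).
    apply: contra BC => BsC; rewrite eqEsubset BsC; exact: CsubB.
  case/subsetPn => g gB gNC.
  have gg := B_good gB.
  have [x /andP [Hx Hgx]] : exists x, ~~ x.1.1 && (g x).1.1.
    apply/existsP; apply: contraR gNC => /existsPn H.
    apply: good_C gg _ => x Hx; apply/negbTE.
    by have := H x; rewrite Hx.
  have [] := dir1 gg (negbTE Hx) Hgx => HK.
    by left; apply/cond_p; rewrite mul1r.
  by right; apply/cond_m; rewrite mulN1r.
- move=> Hc.
  have [e [He HK]] : exists e, (e = 1 \/ e = -1) /\ K * K * (1 + 1) = e * (1 + 1).
    case: Hc => [/cond_p|/cond_m] H; [exists 1 | exists (-1)]; auto.
  apply/negP => /eqP BC.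
  have : mu He HK \in Cgrp n k by rewrite -BC; apply: good_B; apply: good_mu.
  by move/C_U => /(_ x0 erefl); rewrite mu_s.
- move/cond_p => HK.
  have He : (1 : 'Z_n) = 1 \/ (1 : 'Z_n) = -1 by left.
  exists (mu He HK); split; last exact: gen_part.
  by move=> -[[s i] j]; rewrite permE.
- move/cond_m => HK.
  have He : (-1 : 'Z_n) = 1 \/ (-1 : 'Z_n) = -1 by right.
  exists (mu He HK); split; last exact: gen_part.
  by move=> -[[s i] j]; rewrite permE.
Qed.
End Main.

Local Close Scope ring_scope.

Theorem lemma5p4 (n k : nat) :
  ~~ odd n -> ~~ odd k -> (1 <= k)%N -> (k.*2 < n)%N ->
  (Bgrp n k != Cgrp n k <->
     (k ^ 2 = 1 %[mod n./2] \/ k ^ 2 + 1 = 0 %[mod n./2]))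
  /\ (k ^ 2 = 1 %[mod n./2] ->
      exists lam : {perm V n}, (forall x, lam x = lamf k x) /\
        Bgrp n k = (<< Cgrp n k :|: [set lam] >>)%g /\
        Bgrp n k = (<< [set rho n; delta n; beta n; lam] >>)%g)
  /\ (k ^ 2 + 1 = 0 %[mod n./2] ->
      exists tau : {perm V n}, (forall x, tau x = tauf k x) /\
        Bgrp n k = (<< Cgrp n k :|: [set tau] >>)%g /\
        Bgrp n k = (<< [set rho n; delta n; beta n; tau] >>)%g).
Proof.
move=> Hn Hk Hk1 Hkn.
case: n Hn Hkn => [|[|m]] Hn Hkn //.
have Hm : ~~ odd m by move: Hn; rewrite /= negbK.
exact: (main_m Hm Hk Hk1 Hkn).
Qed.
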